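(* The Rudin-Shapiro sequence $\mathbf{r}$ has an unbordered factor of every length $n \geq 0$.
   Context: For a word $w \in 1\{0,1\}^*$ and integer $n \geq 0$, let $a_w(n)$ be the number of (possibly overlapping) occurrences of $w$ as a factor of the ordinary (most significant digit first) base-$2$ representation of $n$. The Rudin-Shapiro sequence is $\mathbf{r} = r(0)r(1)r(2)\cdots$ with $r(n) = (-1)^{a_{11}(n)}$, a sequence over $\{1,-1\}$. A factor of length $n$ of $\mathbf{r}$ is a word $r(i)r(i+1)\cdots r(i+n-1)$ for some $i \geq 0$. A finite word $w$ is bordered if there is a word $x$ with $0 < |x| \leq |w|/2$ such that $w$ both begins and ends with $x$; otherwise $w$ is unbordered. *)

(* Defs.v *)
From mathcomp Require Import all_boot all_algebra.
Set Implicit Arguments. Unset Strict Implicit. Unset Printing Implicit Defensive.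
Import GRing.Theory.
Local Open Scope ring_scope.

Fixpoint bin_lsb_aux (fuel n : nat) : seq bool :=
  match fuel with
  | 0%N => [::]
  | fuel'.+1 => if n == 0%N then [::] else odd n :: bin_lsb_aux fuel' n./2
  end.

Definition bin (n : nat) : seq bool := rev (bin_lsb_aux n n).

(* number of (possibly overlapping) occurrences of w as a factor of s *)
Definition occ (w s : seq bool) : nat :=
  count (fun i => take (size w) (drop i s) == w) (iota 0 (size s - size w).+1).

Definition a_w (w : seq bool) (n : nat) : nat := occ w (bin n).

Definition rs (n : nat) : int := (-1) ^+ a_w [:: true; true] n.

Definition rs_factor (i len : nat) : seq int := [seq rs (i + k) | k <- iota 0 len].

Definition bordered {T : eqType} (w : seq T) : Prop :=
  exists x : seq T, (0 < size x)%N /\ (size x <= (size w)./2)%N /\ prefix x w /\ suffix x w.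

Definition unbordered {T : eqType} (w : seq T) : Prop := ~ bordered w.

Lemma bin_test : [:: bin 0; bin 1; bin 6; bin 11] = [:: [::]; [:: true]; [:: true; true; false]; [:: true; false; true; true]].
Proof. by []. Qed.
Lemma rs_test : [seq rs k | k <- iota 0 8] = [:: 1; 1; 1; -1; 1; 1; -1; 1]%R.
Proof. by []. Qed.

(* Main.v *)
Require Import Defs.
From mathcomp Require Import all_boot all_algebra.
From mathcomp Require Import zify.
Set Implicit Arguments. Unset Strict Implicit. Unset Printing Implicit Defensive.

Lemma aux_fuel f1 f2 n : n <= f1 -> n <= f2 -> bin_lsb_aux f1 n = bin_lsb_aux f2 n.
Proof.
elim: f1 f2 n => [|f1 IH] [|f2] n h1 h2 /=.
- by [].
- by have -> : n = 0 by lia.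
- by have -> : n = 0 by lia.
- case: eqP => // hn; congr (_ :: _); apply: IH; lia.
Qed.

Lemma bin_lsbS n : 0 < n -> bin_lsb_aux n n = odd n :: bin_lsb_aux n./2 n./2.
Proof.
case: n => [//|n] _ /=; congr (_ :: _); apply: aux_fuel; lia.
Qed.

Lemma bin_double n (b : bool) : 0 < n -> bin (b + n.*2) = rcons (bin n) b.
Proof.
move=> hn; rewrite /bin bin_lsbS; last by lia.
rewrite oddD odd_double addbF rev_cons; congr (rcons (rev _) _); [by rewrite half_bit_double | by case: b].
Qed.

Definition occ11 s := occ [:: true; true] s.

Lemma occ11_nil : occ11 [::] = 0. Proof. by []. Qed.
Lemma occ11_1 x : occ11 [:: x] = 0. Proof. by case: x. Qed.
Lemma occ11_cons x y t : occ11 [:: x, y & t] = (x && y) + occ11 (y :: t).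
Proof.
rewrite /occ11 /occ /= take0.
have -> : ([:: x; y] == [:: true; true]) = x && y by case: x; case: y.
congr (_ + _).
case: t => [|z t] /=; first by case: y.
rewrite !subSS subn0 /=; congr (_ + _).
have -> : iota 2 (size t) = map (addn 2) (iota 0 (size t)) by rewrite -iotaDl.
have -> : iota 1 (size t) = map (addn 1) (iota 0 (size t)) by rewrite -iotaDl.
by rewrite !count_map.
Qed.

Lemma occ11_rcons s b : occ11 (rcons s b) = occ11 s + (last false s && b).
Proof.
elim: s => [|x s IH] /=; first by rewrite occ11_1 occ11_nil; case: b.
case: s IH => [|y s] IH /=.
  by rewrite occ11_cons occ11_1 occ11_1 addn0.
by rewrite occ11_cons IH occ11_cons addnA.
Qed.

Definition bit n := odd (a_w [:: true; true] n).

Lemma last_bin n : 0 < n -> last false (bin n) = odd n.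
Proof. by move=> hn; rewrite /bin bin_lsbS // rev_cons last_rcons. Qed.

Lemma bit_double n (b : bool) : bit (b + n.*2) = bit n (+) (odd n && b).
Proof.
case: n => [|n]; first by case: b.
rewrite /bit /a_w bin_double // -/(occ11 _) occ11_rcons last_bin // oddD.
by case: (odd _ && b).
Qed.

Definition g (k : nat) (par : bool) : bool :=
  match k with 0 | 1 => false | 2 => par | _ => ~~ par end.

Lemma bit_block j k : k < 4 -> bit (4 * j + k) = bit j (+) g k (odd j).
Proof.
case: k => [|[|[|[|k]]]] // _.
- have -> : 4 * j + 0 = false + (false + j.*2).*2 by rewrite /= !add0n -!muln2; lia.
  by rewrite !bit_double /= andbF addbF andbF addbF.
- have -> : 4 * j + 1 = true + (false + j.*2).*2 by rewrite /= !add0n -!muln2; lia.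
  by rewrite !bit_double /= odd_double !andbF !addbF.
- have -> : 4 * j + 2 = false + (true + j.*2).*2 by rewrite /= -!muln2; lia.
  by rewrite !bit_double /= andbF addbF andbT.
- have -> : 4 * j + 3 = true + (true + j.*2).*2 by rewrite /= -!muln2; lia.
  rewrite !bit_double /= odd_double /= !andbT.
  by case: (bit j); case: (odd j).
Qed.

Definition letter (v : seq bool) (pi : bool) (t : nat) : bool :=
  nth false v (t %/ 4) (+) g (t %% 4) (pi (+) odd (t %/ 4)).

Lemma letter_ok B v t : (forall o, o < size v -> bit (B + o) = nth false v o) ->
  t < 4 * size v -> bit (4 * B + t) = letter v (odd B) t.
Proof.
move=> hv ht.
have -> : 4 * B + t = 4 * (B + t %/ 4) + t %% 4.
  by rewrite {1}(divn_eq t 4); lia.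
rewrite bit_block ?ltn_mod // hv; last by rewrite ltn_divLR //; lia.
by rewrite /letter oddD.
Qed.

Definition st (i m : nat) : seq bool :=
  odd i :: [seq bit (i - 2 + k) | k <- iota 0 5] ++
  odd (i + m) :: [seq bit (i + m - 3 + k) | k <- iota 0 5].

Definition xsOf (s : seq bool) := take 5 (drop 1 s).
Definition ysOf (s : seq bool) := drop 7 s.
Definition sl (s : seq bool) t := letter (xsOf s) (nth false s 0) t.
Definition el (s : seq bool) t := letter (ysOf s) (~~ nth false s 6) t.

Lemma sl_ok i m t : 2 <= i -> t < 20 -> bit (4 * (i - 2) + t) = sl (st i m) t.
Proof.
move=> hi ht; rewrite /sl /st /xsOf /=.
have -> : odd i = odd (i - 2).
  by rewrite -{1}(subnK hi) oddD addbF.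
apply: letter_ok => // o ho.
by case: o ho => [|[|[|[|[|o]]]]].
Qed.

Lemma el_ok i m t : 3 <= i + m -> t < 20 -> bit (4 * (i + m - 3) + t) = el (st i m) t.
Proof.
move=> hi ht; rewrite /el /st /ysOf /=.
have -> : ~~ odd (i + m) = odd (i + m - 3).
  by rewrite -{1}(subnK hi) oddD /= addbT negbK.
apply: letter_ok => // o ho.
by case: o ho => [|[|[|[|[|o]]]]].
Qed.

Definition trans (s : seq bool) (a c : nat) : seq bool :=
  ~~ odd a :: [seq sl s (3 + a + k) | k <- iota 0 5] ++
  ~~ odd c :: [seq el s (6 + c + k) | k <- iota 0 5].

Lemma odd4 x y : odd (4 * x + y) = odd y.
Proof. by rewrite oddD oddM. Qed.

Lemma trans_ok i m a c : 2 <= i -> 1 <= m -> a < 7 -> c < 7 -> a <= 4 * m + c ->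
  st (4 * i + a - 3) (4 * m + c - a) = trans (st i m) a c.
Proof.
move=> hi hm ha hc hac.
rewrite /trans [in LHS]/st.
have -> : 4 * i + a - 3 + (4 * m + c - a) = 4 * (i + m - 1) + (c + 1) by lia.
have -> : 4 * i + a - 3 = 4 * (i - 1) + (a + 1) by lia.
rewrite !odd4 !addn1 !oddS.
congr (_ :: _ ++ _ :: _); apply/eq_in_map => k; rewrite mem_iota => /andP [_ hk].
  have -> : 4 * (i - 1) + a.+1 - 2 + k = 4 * (i - 2) + (3 + a + k) by lia.
  by rewrite (sl_ok m) //; lia.
have -> : 4 * (i + m - 1) + c.+1 - 3 + k = 4 * (i + m - 3) + (6 + c + k) by lia.
by rewrite el_ok //; lia.
Qed.

Definition bools := [:: false; true].
Definition bl3 : seq (seq bool) := [:: [:: false; false; false]; [:: true; false; false]; [:: false; true; false]; [:: true; true; false]; [:: false; false; true]; [:: true; false; true]; [:: false; true; true]; [:: true; true; true]].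

Definition check_local :=
  all (fun t0 => all (fun t1 => all (fun p0 => all (fun p1 => all (fun v => all (fun w =>
    all (fun k => letter v p0 (t0 + k) == letter w p1 (t1 + k)) (iota 0 9) ==>
    (t0 == t1) && (p0 == p1)) bl3) bl3) bools) bools) (iota 0 4)) (iota 0 4).

Lemma check_local_ok : check_local = true.
Proof. by vm_compute. Qed.

Lemma win3 B t : t < 12 -> bit (4 * B + t) = letter [:: bit B; bit (B + 1); bit (B + 2)] (odd B) t.
Proof.
move=> ht; apply: letter_ok => // o ho.
by case: o ho => [|[|[|o]]] //= _; rewrite ?addn0.
Qed.

Lemma in_bl3 x y z : [:: x; y; z] \in bl3.
Proof. by case: x; case: y; case: z. Qed.

Lemma allb (P : pred bool) b : all P bools -> P b.
Proof. by rewrite /= andbT => /andP [h1 h2]; case: b. Qed.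

Lemma alli (P : pred nat) n : all P (iota 0 n) -> forall k, k < n -> P k.
Proof. by move=> /allP H k hk; apply: H; rewrite mem_iota. Qed.

Lemma local t t' : (forall k, k < 9 -> bit (t + k) = bit (t' + k)) ->
  t %% 4 = t' %% 4 /\ odd (t %/ 4) = odd (t' %/ 4).
Proof.
move=> H.
have := check_local_ok; rewrite /check_local.
move=> /alli /(_ (t %% 4) (ltn_mod _ _)) /alli /(_ (t' %% 4) (ltn_mod _ _)).
move=> /(allb (odd (t %/ 4))) /(allb (odd (t' %/ 4))).
move=> /allP /(_ _ (in_bl3 (bit (t %/ 4)) (bit (t %/ 4 + 1)) (bit (t %/ 4 + 2)))).
move=> /allP /(_ _ (in_bl3 (bit (t' %/ 4)) (bit (t' %/ 4 + 1)) (bit (t' %/ 4 + 2)))).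
move=> /implyP Himp.
suff /Himp /andP [/eqP -> /eqP ->] : all (fun k => letter [:: bit (t %/ 4); bit (t %/ 4 + 1); bit (t %/ 4 + 2)] (odd (t %/ 4)) (t %% 4 + k) == letter [:: bit (t' %/ 4); bit (t' %/ 4 + 1); bit (t' %/ 4 + 2)] (odd (t' %/ 4)) (t' %% 4 + k)) (iota 0 9) by [].
  apply/allP => k; rewrite mem_iota add0n => /andP [_ hk].
  have e : forall x, 4 * (x %/ 4) + (x %% 4 + k) = x + k.
    by move=> x; rewrite addnA [4 * _]mulnC -divn_eq.
  rewrite -!win3; first by rewrite !e H.
  - by have := ltn_mod t' 4; lia.
  - by have := ltn_mod t 4; lia.
Qed.

Local Open Scope ring_scope.
Import GRing.Theory.

Lemma rs_bit n : rs n = (-1) ^+ bit n.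
Proof. by rewrite /rs /bit signr_odd. Qed.

Lemma rs_inj x y : rs x = rs y -> bit x = bit y.
Proof. by rewrite !rs_bit; case: (bit x); case: (bit y). Qed.

Lemma bit_rs x y : bit x = bit y -> rs x = rs y.
Proof. by rewrite !rs_bit => ->. Qed.

Local Close Scope ring_scope.

Lemma nth_rs i n k : k < n -> nth 0%R (rs_factor i n) k = rs (i + k).
Proof. by move=> hk; rewrite /rs_factor (nth_map 0) ?size_iota // nth_iota. Qed.

Lemma size_rs i n : size (rs_factor i n) = n.
Proof. by rewrite /rs_factor size_map size_iota. Qed.

Definition small_ok (s : seq bool) (a c : nat) : bool :=
  all (fun l => has (fun k => sl s (5 + a + k) != el s (9 + c - l + k)) (iota 0 l)) (iota 1 8).

Lemma border_eq (w x : seq int) : prefix x w -> suffix x w -> size x <= size w ->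
  forall k, k < size x -> nth 0%R w k = nth 0%R w (size w - size x + k).
Proof.
rewrite prefixE suffixE => /eqP hp /eqP hs hsz k hk.
by rewrite -(nth_take _ hk) hp -{1}hs nth_drop.
Qed.

Lemma lift i m a dd : 2 <= i -> 1 <= m -> dd < 4 -> dd <= a -> a < 7 ->
  unbordered (rs_factor i m) -> small_ok (st i m) a (a - dd) ->
  unbordered (rs_factor (4 * i + a - 3) (4 * m - dd)).
Proof.
move=> hi hm hd hda ha hu hsm [x [hx0 [hxL [hpre hsuf]]]].
set s := 4 * i + a - 3; set L := 4 * m - dd.
rewrite size_rs -/L in hxL.
set l := size x in hx0 hxL.
have Heq : forall k, k < l -> bit (s + k) = bit (s + (L - l) + k).
  move=> k hk; apply: rs_inj.
  have hxL' : l <= size (rs_factor s L) by rewrite size_rs; lia.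
  have := border_eq hpre hsuf hxL' hk; rewrite size_rs -/L.
  by rewrite -/l !nth_rs ?addnA //; lia.
have [hl8 | hl9] := leqP l 8.
  move: hsm; rewrite /small_ok => /allP /(_ l); rewrite mem_iota.
  move=> /(_ ltac:(lia)) /hasP [k]; rewrite mem_iota => /andP [_ hk].
  rewrite -(@sl_ok i m) -?(@el_ok i m); try lia.
  have -> : 4 * (i - 2) + (5 + a + k) = s + k by rewrite /s; lia.
  have -> : 4 * (i + m - 3) + (9 + (a - dd) - l + k) = s + (L - l) + k by rewrite /s /L; lia.
  by rewrite Heq ?eqxx.
have [hmod hodd] := local (fun k hk => Heq k (leq_trans hk hl9)).
set p := L - l in Heq hmod hodd.
have hp4 : p = 4 * (p %/ 4) by lia.
set q := p %/ 4 in hp4.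
have hq : odd q = false.
  move: hodd; rewrite hp4 mulnC divnDr ?dvdn_mull // mulnK // oddD.
  by case: (odd q); case: (odd _).
have Hq : forall j, i <= j -> j < i + m - q -> bit j = bit (j + q).
  move=> j hj1 hj2.
  set y := maxn (4 * j) s.
  have hy1 : 4 * j <= y by rewrite leq_maxl.
  have hy2 : y < 4 * j + 4 by rewrite /y gtn_max; apply/andP; split; rewrite /s; lia.
  have hy3 : s <= y by rewrite leq_maxr.
  have hy4 : y < s + l.
    rewrite /y gtn_max; apply/andP; split; rewrite /s; lia.
  have := Heq (y - s) ltac:(lia).
  have -> : s + (y - s) = 4 * j + (y - 4 * j) by lia.
  have -> : s + p + (y - s) = 4 * (j + q) + (y - 4 * j) by lia.
  rewrite !bit_block; try lia.
  by rewrite oddD hq addbF => /addIb.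
apply: hu.
exists (take (m - q) (rs_factor i m)).
rewrite size_take size_rs.
have hqm : q < m by lia.
have hqm2 : m <= 2 * q by lia.
rewrite ifT; last by lia.
split; first by lia.
split; first by lia.
split; first by rewrite prefixE size_take size_rs ifT //; lia.
rewrite suffixE size_take size_rs ifT; last by lia.
apply/eqP/(@eq_from_nth _ 0%R); first by rewrite size_drop size_take !size_rs ifT //; lia.
move=> k; rewrite size_drop size_rs => hk.
rewrite nth_drop nth_take; last by lia.
rewrite !nth_rs; try lia.
apply: bit_rs; rewrite (Hq (i + k)); try lia.
congr bit; lia.
Qed.

Inductive trie := TL of bool | TN of trie & trie.

Fixpoint tmem (t : trie) (s : seq bool) : bool :=
  match t, s with
  | TL b, _ => b && (s == [::])
  | TN l r, x :: s' => tmem (if x then r else l) s'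
  | TN _ _, [::] => false
  end.

Fixpoint elems (t : trie) : seq (seq bool) :=
  match t with
  | TL b => if b then [:: [::]] else [::]
  | TN l r => map (cons false) (elems l) ++ map (cons true) (elems r)
  end.

Lemma tmem_elems t s : tmem t s -> s \in elems t.
Proof.
elim: t s => [b|l IHl r IHr] s /=.
  by case: b => //= /eqP ->; rewrite inE.
case: s => [|x s] //; rewrite mem_cat; case: x => H.
- by apply/orP; right; rewrite mem_map; [apply: IHr | move=> u v []].
- by apply/orP; left; rewrite mem_map; [apply: IHl | move=> u v []].
Qed.

Definition PHI : trie := (TN (TN (TN (TN (TN (TN (TN (TN (TN (TN (TL false) (TN (TN (TL true) (TL true)) (TN (TL true) (TL true)))) (TN (TL false) (TN (TN (TL true) (TL true)) (TN (TL true) (TL true))))) (TN (TN (TL false) (TN (TN (TL true) (TL true)) (TN (TL true) (TL true)))) (TN (TL false) (TN (TN (TL true) (TL true)) (TN (TL true) (TL true)))))) (TN (TN (TN (TL false) (TN (TN (TL true) (TL true)) (TN (TL true) (TL true)))) (TN (TL false) (TN (TN (TL true) (TL true)) (TN (TL true) (TL true))))) (TN (TN (TL false) (TN (TN (TL true) (TL true)) (TN (TL true) (TL true)))) (TN (TL false) (TN (TN (TL true) (TL true)) (TN (TL true) (TL true))))))) (TN (TN (TN (TL false) (TN (TL false) (TN (TN (TL true) (TL true)) (TN (TL true) (TL true))))) (TN (TN (TL false) (TN (TN (TL true) (TL true)) (TN (TL true) (TL true)))) (TN (TL false) (TN (TN (TL true) (TL true)) (TN (TL true) (TL true)))))) (TN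 (TN (TL false) (TN (TL false) (TN (TN (TL true) (TL true)) (TN (TL true) (TL true))))) (TN (TN (TL false) (TN (TN (TL true) (TL true)) (TN (TL true) (TL true)))) (TN (TL false) (TN (TN (TL true) (TL true)) (TN (TL true) (TL true)))))))) (TN (TN (TN (TN (TL false) (TN (TL false) (TN (TN (TL true) (TL true)) (TN (TL true) (TL true))))) (TN (TL false) (TN (TL false) (TN (TN (TL true) (TL true)) (TN (TL true) (TL true)))))) (TN (TN (TL false) (TN (TL false) (TN (TN (TL true) (TL true)) (TN (TL true) (TL true))))) (TN (TL false) (TN (TL false) (TN (TN (TL true) (TL true)) (TN (TL true) (TL true))))))) (TN (TN (TL false) (TN (TL false) (TN (TL false) (TN (TN (TL true) (TL true)) (TN (TL true) (TL true)))))) (TN (TL false) (TN (TL false) (TN (TL false) (TN (TN (TL true) (TL true)) (TN (TL true) (TL true))))))))) (TN (TN (TN (TN (TN (TN (TN (TN (TL true) (TL true)) (TN (TL true) (TL true))) (TL false)) (TL false)) (TL false)) (TN (TN (TN (TN (TN (TL true) (TL true)) (TN (TL true) (TL true))) (TL false)) (TL false)) (TL false))) (TN (TN (TN (TN (TN (TN (TL true) (TL true)) (TN (TL true) (TL true))) (TL false)) (TL false)) (TN (TN (TN (TN (TL true) (TL true)) (TN (TL true) (TL true))) (TL false)) (TL false))) (TN (TN (TN (TN (TN (TL true) (TL true)) (TN (TL true) (TL true))) (TL false)) (TL false)) (TN (TN (TN (TN (TL true) (TL true)) (TN (TL true) (TL true))) (TL false)) (TL false))))) (TN (TN (TN (TN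 (TN (TN (TN (TL true) (TL true)) (TN (TL true) (TL true))) (TL false)) (TN (TN (TN (TL true) (TL true)) (TN (TL true) (TL true))) (TL false))) (TN (TN (TN (TN (TL true) (TL true)) (TN (TL true) (TL true))) (TL false)) (TL false))) (TN (TN (TN (TN (TN (TL true) (TL true)) (TN (TL true) (TL true))) (TL false)) (TN (TN (TN (TL true) (TL true)) (TN (TL true) (TL true))) (TL false))) (TN (TN (TN (TN (TL true) (TL true)) (TN (TL true) (TL true))) (TL false)) (TL false)))) (TN (TN (TN (TN (TN (TN (TL true) (TL true)) (TN (TL true) (TL true))) (TL false)) (TN (TN (TN (TL true) (TL true)) (TN (TL true) (TL true))) (TL false))) (TN (TN (TN (TN (TL true) (TL true)) (TN (TL true) (TL true))) (TL false)) (TN (TN (TN (TL true) (TL true)) (TN (TL true) (TL true))) (TL false)))) (TN (TN (TN (TN (TN (TL true) (TL true)) (TN (TL true) (TL true))) (TL false)) (TN (TN (TN (TL true) (TL true)) (TN (TL true) (TL true))) (TL false))) (TN (TN (TN (TN (TL true) (TL true)) (TN (TL true) (TL true))) (TL false)) (TN (TN (TN (TL true) (TL true)) (TN (TL true) (TL true))) (TL false)))))))) (TN (TN (TN (TN (TN (TN (TN (TL false) (TN (TN (TL true) (TL true)) (TN (TL true) (TL true)))) (TN (TL false) (TN (TN (TL true) (TL true)) (TN (TL true) (TL true))))) (TN (TN (TL false) (TN (TN (TL true) (TL true)) (TN (TL true) (TL true)))) (TN (TL false) (TN (TN (TL true) (TL true)) (TN (TL true) (TL true)))))) (TN (TN (TN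 (TL false) (TN (TN (TL true) (TL true)) (TN (TL true) (TL true)))) (TN (TL false) (TN (TN (TL true) (TL true)) (TN (TL true) (TL true))))) (TN (TN (TL false) (TN (TN (TL true) (TL true)) (TN (TL true) (TL true)))) (TN (TL false) (TN (TN (TL true) (TL true)) (TN (TL true) (TL true))))))) (TN (TN (TN (TL false) (TN (TL false) (TN (TN (TL true) (TL true)) (TN (TL true) (TL true))))) (TN (TN (TL false) (TN (TN (TL true) (TL true)) (TN (TL true) (TL true)))) (TN (TL false) (TN (TN (TL true) (TL true)) (TN (TL true) (TL true)))))) (TN (TN (TL false) (TN (TL false) (TN (TN (TL true) (TL true)) (TN (TL true) (TL true))))) (TN (TN (TL false) (TN (TN (TL true) (TL true)) (TN (TL true) (TL true)))) (TN (TL false) (TN (TN (TL true) (TL true)) (TN (TL true) (TL true)))))))) (TN (TN (TN (TN (TL false) (TN (TL false) (TN (TN (TL true) (TL true)) (TN (TL true) (TL true))))) (TN (TL false) (TN (TL false) (TN (TN (TL true) (TL true)) (TN (TL true) (TL true)))))) (TN (TN (TL false) (TN (TL false) (TN (TN (TL true) (TL true)) (TN (TL true) (TL true))))) (TN (TL false) (TN (TL false) (TN (TN (TL true) (TL true)) (TN (TL true) (TL true))))))) (TN (TN (TL false) (TN (TL false) (TN (TL false) (TN (TN (TL true) (TL true)) (TN (TL true) (TL true)))))) (TN (TL false) (TN (TL false) (TN (TL false) (TN (TN (TL true) (TL true)) (TN (TL true) (TL true))))))))) (TN (TN (TN (TN (TN (TN (TN (TN (TL true) (TL true)) (TN (TL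 true) (TL true))) (TL false)) (TL false)) (TL false)) (TN (TN (TN (TN (TN (TL true) (TL true)) (TN (TL true) (TL true))) (TL false)) (TL false)) (TL false))) (TN (TN (TN (TN (TN (TN (TL true) (TL true)) (TN (TL true) (TL true))) (TL false)) (TL false)) (TN (TN (TN (TN (TL true) (TL true)) (TN (TL true) (TL true))) (TL false)) (TL false))) (TN (TN (TN (TN (TN (TL true) (TL true)) (TN (TL true) (TL true))) (TL false)) (TL false)) (TN (TN (TN (TN (TL true) (TL true)) (TN (TL true) (TL true))) (TL false)) (TL false))))) (TN (TN (TN (TN (TN (TN (TN (TL true) (TL true)) (TN (TL true) (TL true))) (TL false)) (TN (TN (TN (TL true) (TL true)) (TN (TL true) (TL true))) (TL false))) (TN (TN (TN (TN (TL true) (TL true)) (TN (TL true) (TL true))) (TL false)) (TL false))) (TN (TN (TN (TN (TN (TL true) (TL true)) (TN (TL true) (TL true))) (TL false)) (TN (TN (TN (TL true) (TL true)) (TN (TL true) (TL true))) (TL false))) (TN (TN (TN (TN (TL true) (TL true)) (TN (TL true) (TL true))) (TL false)) (TL false)))) (TN (TN (TN (TN (TN (TN (TL true) (TL true)) (TN (TL true) (TL true))) (TL false)) (TN (TN (TN (TL true) (TL true)) (TN (TL true) (TL true))) (TL false))) (TN (TN (TN (TN (TL true) (TL true)) (TN (TL true) (TL true))) (TL false)) (TN (TN (TN (TL true) (TL true)) (TN (TL true) (TL true))) (TL false)))) (TN (TN (TN (TN (TN (TL true) (TL true)) (TN (TL true) (TL true))) (TL false)) (TN (TN (TN (TL true)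 (TL true)) (TN (TL true) (TL true))) (TL false))) (TN (TN (TN (TN (TL true) (TL true)) (TN (TL true) (TL true))) (TL false)) (TN (TN (TN (TL true) (TL true)) (TN (TL true) (TL true))) (TL false))))))))) (TN (TN (TN (TN (TN (TN (TN (TN (TL false) (TN (TN (TL true) (TL true)) (TN (TL true) (TL true)))) (TN (TL false) (TN (TN (TL true) (TL true)) (TN (TL true) (TL true))))) (TN (TN (TL false) (TN (TN (TL true) (TL true)) (TN (TL true) (TL true)))) (TN (TL false) (TN (TN (TL true) (TL true)) (TN (TL true) (TL true)))))) (TN (TN (TN (TL false) (TN (TN (TL true) (TL true)) (TN (TL true) (TL true)))) (TN (TL false) (TN (TN (TL true) (TL true)) (TN (TL true) (TL true))))) (TN (TN (TL false) (TN (TN (TL true) (TL true)) (TN (TL true) (TL true)))) (TN (TL false) (TN (TN (TL true) (TL true)) (TN (TL true) (TL true))))))) (TN (TN (TN (TL false) (TN (TL false) (TN (TN (TL true) (TL true)) (TN (TL true) (TL true))))) (TN (TN (TL false) (TN (TN (TL true) (TL true)) (TN (TL true) (TL true)))) (TN (TL false) (TN (TN (TL true) (TL true)) (TN (TL true) (TL true)))))) (TN (TN (TL false) (TN (TL false) (TN (TN (TL true) (TL true)) (TN (TL true) (TL true))))) (TN (TN (TL false) (TN (TN (TL true) (TL true)) (TN (TL true) (TL true)))) (TN (TL false) (TN (TN (TL true) (TL true)) (TN (TL true) (TL true)))))))) (TN (TN (TN (TN (TL false) (TN (TL false) (TN (TN (TL true) (TL true)) (TN (TL true) (TL true))))) (TN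 (TL false) (TN (TL false) (TN (TN (TL true) (TL true)) (TN (TL true) (TL true)))))) (TN (TN (TL false) (TN (TL false) (TN (TN (TL true) (TL true)) (TN (TL true) (TL true))))) (TN (TL false) (TN (TL false) (TN (TN (TL true) (TL true)) (TN (TL true) (TL true))))))) (TN (TN (TL false) (TN (TL false) (TN (TL false) (TN (TN (TL true) (TL true)) (TN (TL true) (TL true)))))) (TN (TL false) (TN (TL false) (TN (TL false) (TN (TN (TL true) (TL true)) (TN (TL true) (TL true))))))))) (TN (TN (TN (TN (TN (TN (TN (TN (TL true) (TL true)) (TN (TL true) (TL true))) (TL false)) (TL false)) (TL false)) (TN (TN (TN (TN (TN (TL true) (TL true)) (TN (TL true) (TL true))) (TL false)) (TL false)) (TL false))) (TN (TN (TN (TN (TN (TN (TL true) (TL true)) (TN (TL true) (TL true))) (TL false)) (TL false)) (TN (TN (TN (TN (TL true) (TL true)) (TN (TL true) (TL true))) (TL false)) (TL false))) (TN (TN (TN (TN (TN (TL true) (TL true)) (TN (TL true) (TL true))) (TL false)) (TL false)) (TN (TN (TN (TN (TL true) (TL true)) (TN (TL true) (TL true))) (TL false)) (TL false))))) (TN (TN (TN (TN (TN (TN (TN (TL true) (TL true)) (TN (TL true) (TL true))) (TL false)) (TN (TN (TN (TL true) (TL true)) (TN (TL true) (TL true))) (TL false))) (TN (TN (TN (TN (TL true) (TL true)) (TN (TL true) (TL true))) (TL false)) (TL false))) (TN (TN (TN (TN (TN (TL true) (TL true)) (TN (TL true) (TL true))) (TL false)) (TN (TN (TN (TL true) (TL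 true)) (TN (TL true) (TL true))) (TL false))) (TN (TN (TN (TN (TL true) (TL true)) (TN (TL true) (TL true))) (TL false)) (TL false)))) (TN (TN (TN (TN (TN (TN (TL true) (TL true)) (TN (TL true) (TL true))) (TL false)) (TN (TN (TN (TL true) (TL true)) (TN (TL true) (TL true))) (TL false))) (TN (TN (TN (TN (TL true) (TL true)) (TN (TL true) (TL true))) (TL false)) (TN (TN (TN (TL true) (TL true)) (TN (TL true) (TL true))) (TL false)))) (TN (TN (TN (TN (TN (TL true) (TL true)) (TN (TL true) (TL true))) (TL false)) (TN (TN (TN (TL true) (TL true)) (TN (TL true) (TL true))) (TL false))) (TN (TN (TN (TN (TL true) (TL true)) (TN (TL true) (TL true))) (TL false)) (TN (TN (TN (TL true) (TL true)) (TN (TL true) (TL true))) (TL false)))))))) (TN (TN (TN (TN (TN (TN (TN (TL false) (TN (TN (TL true) (TL true)) (TN (TL true) (TL true)))) (TN (TL false) (TN (TN (TL true) (TL true)) (TN (TL true) (TL true))))) (TN (TN (TL false) (TN (TN (TL true) (TL true)) (TN (TL true) (TL true)))) (TN (TL false) (TN (TN (TL true) (TL true)) (TN (TL true) (TL true)))))) (TN (TN (TN (TL false) (TN (TN (TL true) (TL true)) (TN (TL true) (TL true)))) (TN (TL false) (TN (TN (TL true) (TL true)) (TN (TL true) (TL true))))) (TN (TN (TL false) (TN (TN (TL true) (TL true)) (TN (TL true) (TL true)))) (TN (TL false) (TN (TN (TL true) (TL true)) (TN (TL true) (TL true))))))) (TN (TN (TN (TL false) (TN (TL false) (TN (TN (TL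 true) (TL true)) (TN (TL true) (TL true))))) (TN (TN (TL false) (TN (TN (TL true) (TL true)) (TN (TL true) (TL true)))) (TN (TL false) (TN (TN (TL true) (TL true)) (TN (TL true) (TL true)))))) (TN (TN (TL false) (TN (TL false) (TN (TN (TL true) (TL true)) (TN (TL true) (TL true))))) (TN (TN (TL false) (TN (TN (TL true) (TL true)) (TN (TL true) (TL true)))) (TN (TL false) (TN (TN (TL true) (TL true)) (TN (TL true) (TL true)))))))) (TN (TN (TN (TN (TL false) (TN (TL false) (TN (TN (TL true) (TL true)) (TN (TL true) (TL true))))) (TN (TL false) (TN (TL false) (TN (TN (TL true) (TL true)) (TN (TL true) (TL true)))))) (TN (TN (TL false) (TN (TL false) (TN (TN (TL true) (TL true)) (TN (TL true) (TL true))))) (TN (TL false) (TN (TL false) (TN (TN (TL true) (TL true)) (TN (TL true) (TL true))))))) (TN (TN (TL false) (TN (TL false) (TN (TL false) (TN (TN (TL true) (TL true)) (TN (TL true) (TL true)))))) (TN (TL false) (TN (TL false) (TN (TL false) (TN (TN (TL true) (TL true)) (TN (TL true) (TL true))))))))) (TN (TN (TN (TN (TN (TN (TN (TN (TL true) (TL true)) (TN (TL true) (TL true))) (TL false)) (TL false)) (TL false)) (TN (TN (TN (TN (TN (TL true) (TL true)) (TN (TL true) (TL true))) (TL false)) (TL false)) (TL false))) (TN (TN (TN (TN (TN (TN (TL true) (TL true)) (TN (TL true) (TL true))) (TL false)) (TL false)) (TN (TN (TN (TN (TL true) (TL true)) (TN (TL true) (TL true))) (TL false)) (TL false))) (TN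 (TN (TN (TN (TN (TL true) (TL true)) (TN (TL true) (TL true))) (TL false)) (TL false)) (TN (TN (TN (TN (TL true) (TL true)) (TN (TL true) (TL true))) (TL false)) (TL false))))) (TN (TN (TN (TN (TN (TN (TN (TL true) (TL true)) (TN (TL true) (TL true))) (TL false)) (TN (TN (TN (TL true) (TL true)) (TN (TL true) (TL true))) (TL false))) (TN (TN (TN (TN (TL true) (TL true)) (TN (TL true) (TL true))) (TL false)) (TL false))) (TN (TN (TN (TN (TN (TL true) (TL true)) (TN (TL true) (TL true))) (TL false)) (TN (TN (TN (TL true) (TL true)) (TN (TL true) (TL true))) (TL false))) (TN (TN (TN (TN (TL true) (TL true)) (TN (TL true) (TL true))) (TL false)) (TL false)))) (TN (TN (TN (TN (TN (TN (TL true) (TL true)) (TN (TL true) (TL true))) (TL false)) (TN (TN (TN (TL true) (TL true)) (TN (TL true) (TL true))) (TL false))) (TN (TN (TN (TN (TL true) (TL true)) (TN (TL true) (TL true))) (TL false)) (TN (TN (TN (TL true) (TL true)) (TN (TL true) (TL true))) (TL false)))) (TN (TN (TN (TN (TN (TL true) (TL true)) (TN (TL true) (TL true))) (TL false)) (TN (TN (TN (TL true) (TL true)) (TN (TL true) (TL true))) (TL false))) (TN (TN (TN (TN (TL true) (TL true)) (TN (TL true) (TL true))) (TL false)) (TN (TN (TN (TL true) (TL true)) (TN (TL true) (TL true))) (TL false)))))))))) (TN (TN (TN (TN (TN (TN (TN (TN (TN (TL false) (TN (TN (TL true) (TL true)) (TN (TL true) (TL true)))) (TN (TL false) (TN (TL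 false) (TN (TL true) (TL true))))) (TN (TN (TL false) (TN (TN (TL true) (TL true)) (TN (TL true) (TL true)))) (TN (TL false) (TN (TL false) (TN (TL true) (TL true)))))) (TN (TN (TN (TL false) (TN (TN (TL true) (TL true)) (TN (TL true) (TL true)))) (TN (TL false) (TN (TN (TL true) (TL true)) (TN (TL true) (TL true))))) (TN (TN (TL false) (TN (TN (TL true) (TL true)) (TN (TL true) (TL true)))) (TN (TL false) (TN (TN (TL true) (TL true)) (TN (TL true) (TL true))))))) (TN (TN (TN (TL false) (TN (TL false) (TN (TL false) (TN (TL true) (TL true))))) (TN (TN (TL false) (TN (TN (TL true) (TL true)) (TN (TL true) (TL true)))) (TN (TL false) (TN (TL false) (TN (TL true) (TL true)))))) (TN (TN (TL false) (TN (TL false) (TN (TN (TL true) (TL true)) (TN (TL true) (TL true))))) (TN (TN (TL false) (TN (TN (TL true) (TL true)) (TN (TL true) (TL true)))) (TN (TL false) (TN (TN (TL true) (TL true)) (TN (TL true) (TL true)))))))) (TN (TN (TL false) (TN (TN (TL false) (TN (TL false) (TN (TN (TL true) (TL true)) (TN (TL true) (TL true))))) (TN (TL false) (TN (TL false) (TN (TN (TL true) (TL true)) (TN (TL true) (TL true))))))) (TN (TL false) (TN (TL false) (TN (TL false) (TN (TL false) (TN (TN (TL true) (TL true)) (TN (TL true) (TL true))))))))) (TN (TN (TN (TN (TN (TN (TN (TN (TL true) (TL true)) (TN (TL true) (TL true))) (TL false)) (TL false)) (TL false)) (TN (TN (TN (TN (TN (TL true) (TL true)) (TN (TL true) (TL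 true))) (TL false)) (TL false)) (TL false))) (TN (TN (TN (TN (TN (TN (TL true) (TL true)) (TN (TL true) (TL true))) (TL false)) (TL false)) (TN (TN (TN (TN (TL true) (TL true)) (TN (TL true) (TL true))) (TL false)) (TL false))) (TN (TN (TN (TN (TN (TL true) (TL true)) (TN (TL true) (TL true))) (TL false)) (TL false)) (TN (TN (TN (TN (TL true) (TL true)) (TN (TL true) (TL true))) (TL false)) (TL false))))) (TN (TN (TN (TN (TN (TN (TN (TL true) (TL true)) (TN (TL true) (TL true))) (TL false)) (TN (TN (TN (TL true) (TL true)) (TN (TL true) (TL true))) (TL false))) (TN (TN (TN (TN (TL true) (TL true)) (TN (TL true) (TL true))) (TL false)) (TL false))) (TN (TN (TN (TN (TN (TL true) (TL true)) (TN (TL true) (TL true))) (TL false)) (TN (TN (TN (TL true) (TL true)) (TN (TL true) (TL true))) (TL false))) (TN (TN (TN (TN (TL true) (TL true)) (TN (TL true) (TL true))) (TL false)) (TL false)))) (TN (TN (TN (TN (TN (TN (TL true) (TL true)) (TN (TL true) (TL true))) (TL false)) (TN (TN (TN (TL true) (TL true)) (TN (TL true) (TL true))) (TL false))) (TN (TN (TN (TN (TL true) (TL true)) (TN (TL true) (TL true))) (TL false)) (TN (TN (TN (TL true) (TL true)) (TN (TL true) (TL true))) (TL false)))) (TN (TN (TN (TN (TN (TL true) (TL true)) (TN (TL true) (TL true))) (TL false)) (TN (TN (TN (TL true) (TL true)) (TN (TL true) (TL true))) (TL false))) (TN (TN (TN (TN (TL true) (TL true)) (TN (TL true) (TL true)))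 (TL false)) (TN (TN (TN (TL true) (TL true)) (TN (TL true) (TL true))) (TL false)))))))) (TN (TN (TN (TN (TN (TN (TN (TL false) (TN (TN (TL true) (TL true)) (TN (TL true) (TL true)))) (TN (TL false) (TN (TN (TL true) (TL true)) (TN (TL true) (TL true))))) (TN (TN (TL false) (TN (TN (TL true) (TL true)) (TN (TL true) (TL true)))) (TN (TL false) (TN (TN (TL true) (TL true)) (TN (TL true) (TL true)))))) (TN (TN (TN (TL false) (TN (TN (TL true) (TL true)) (TN (TL true) (TL true)))) (TN (TL false) (TN (TN (TL true) (TL true)) (TN (TL true) (TL true))))) (TN (TN (TL false) (TN (TN (TL true) (TL true)) (TN (TL true) (TL true)))) (TN (TL false) (TN (TN (TL true) (TL true)) (TN (TL true) (TL true))))))) (TN (TN (TN (TL false) (TN (TL false) (TN (TN (TL true) (TL true)) (TN (TL true) (TL true))))) (TN (TN (TL false) (TN (TN (TL true) (TL true)) (TN (TL true) (TL true)))) (TN (TL false) (TN (TN (TL true) (TL true)) (TN (TL true) (TL true)))))) (TN (TN (TL false) (TN (TL false) (TN (TN (TL true) (TL true)) (TN (TL true) (TL true))))) (TN (TN (TL false) (TN (TN (TL true) (TL true)) (TN (TL true) (TL true)))) (TN (TL false) (TN (TN (TL true) (TL true)) (TN (TL true) (TL true)))))))) (TN (TN (TN (TN (TL false) (TN (TL false) (TN (TN (TL true) (TL true)) (TN (TL true) (TL true))))) (TN (TL false) (TN (TL false) (TN (TN (TL true) (TL true)) (TN (TL true) (TL true)))))) (TN (TN (TL false) (TN (TL false)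 (TN (TN (TL true) (TL true)) (TN (TL true) (TL true))))) (TN (TL false) (TN (TL false) (TN (TN (TL true) (TL true)) (TN (TL true) (TL true))))))) (TN (TN (TL false) (TN (TL false) (TN (TL false) (TN (TN (TL true) (TL true)) (TN (TL true) (TL true)))))) (TN (TL false) (TN (TL false) (TN (TL false) (TN (TN (TL true) (TL true)) (TN (TL true) (TL true))))))))) (TN (TN (TN (TL false) (TN (TN (TN (TN (TN (TL true) (TL true)) (TN (TL true) (TL true))) (TL false)) (TL false)) (TL false))) (TN (TL false) (TN (TN (TN (TN (TN (TL true) (TL true)) (TN (TL true) (TL true))) (TL false)) (TL false)) (TN (TN (TN (TN (TL true) (TL true)) (TN (TL true) (TL true))) (TL false)) (TL false))))) (TN (TN (TN (TN (TN (TN (TN (TL true) (TL true)) (TL false)) (TL false)) (TN (TN (TN (TL true) (TL true)) (TN (TL true) (TL true))) (TL false))) (TN (TN (TN (TN (TL true) (TL true)) (TL false)) (TL false)) (TL false))) (TN (TN (TN (TN (TN (TL true) (TL true)) (TN (TL true) (TL true))) (TL false)) (TN (TN (TN (TL true) (TL true)) (TN (TL true) (TL true))) (TL false))) (TN (TN (TN (TN (TL true) (TL true)) (TN (TL true) (TL true))) (TL false)) (TL false)))) (TN (TN (TN (TN (TN (TN (TL true) (TL true)) (TL false)) (TL false)) (TN (TN (TN (TL true) (TL true)) (TN (TL true) (TL true))) (TL false))) (TN (TN (TN (TN (TL true) (TL true)) (TL false)) (TL false)) (TN (TN (TN (TL true) (TL true)) (TN (TL true) (TL true))) (TL false)))) (TN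 (TN (TN (TN (TN (TL true) (TL true)) (TN (TL true) (TL true))) (TL false)) (TN (TN (TN (TL true) (TL true)) (TN (TL true) (TL true))) (TL false))) (TN (TN (TN (TN (TL true) (TL true)) (TN (TL true) (TL true))) (TL false)) (TN (TN (TN (TL true) (TL true)) (TN (TL true) (TL true))) (TL false))))))))) (TN (TN (TN (TN (TN (TN (TN (TN (TL false) (TN (TN (TL true) (TL true)) (TN (TL true) (TL true)))) (TN (TL false) (TN (TL false) (TN (TL true) (TL true))))) (TN (TN (TL false) (TN (TN (TL true) (TL true)) (TN (TL true) (TL true)))) (TN (TL false) (TN (TL false) (TN (TL true) (TL true)))))) (TN (TN (TN (TL false) (TN (TN (TL true) (TL true)) (TN (TL true) (TL true)))) (TN (TL false) (TN (TN (TL true) (TL true)) (TN (TL true) (TL true))))) (TN (TN (TL false) (TN (TN (TL true) (TL true)) (TN (TL true) (TL true)))) (TN (TL false) (TN (TN (TL true) (TL true)) (TN (TL true) (TL true))))))) (TN (TN (TN (TL false) (TN (TL false) (TN (TL false) (TN (TL true) (TL true))))) (TN (TN (TL false) (TN (TN (TL true) (TL true)) (TN (TL true) (TL true)))) (TN (TL false) (TN (TL false) (TN (TL true) (TL true)))))) (TN (TN (TL false) (TN (TL false) (TN (TN (TL true) (TL true)) (TN (TL true) (TL true))))) (TN (TN (TL false) (TN (TN (TL true) (TL true)) (TN (TL true) (TL true)))) (TN (TL false) (TN (TN (TL true) (TL true)) (TN (TL true) (TL true)))))))) (TN (TN (TL false) (TN (TN (TL false) (TN (TL false) (TN (TN (TL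 true) (TL true)) (TN (TL true) (TL true))))) (TN (TL false) (TN (TL false) (TN (TN (TL true) (TL true)) (TN (TL true) (TL true))))))) (TN (TL false) (TN (TL false) (TN (TL false) (TN (TL false) (TN (TN (TL true) (TL true)) (TN (TL true) (TL true))))))))) (TN (TN (TN (TN (TN (TN (TN (TN (TL true) (TL true)) (TN (TL true) (TL true))) (TL false)) (TL false)) (TL false)) (TN (TN (TN (TN (TN (TL true) (TL true)) (TN (TL true) (TL true))) (TL false)) (TL false)) (TL false))) (TN (TN (TN (TN (TN (TN (TL true) (TL true)) (TN (TL true) (TL true))) (TL false)) (TL false)) (TN (TN (TN (TN (TL true) (TL true)) (TN (TL true) (TL true))) (TL false)) (TL false))) (TN (TN (TN (TN (TN (TL true) (TL true)) (TN (TL true) (TL true))) (TL false)) (TL false)) (TN (TN (TN (TN (TL true) (TL true)) (TN (TL true) (TL true))) (TL false)) (TL false))))) (TN (TN (TN (TN (TN (TN (TN (TL true) (TL true)) (TN (TL true) (TL true))) (TL false)) (TN (TN (TN (TL true) (TL true)) (TN (TL true) (TL true))) (TL false))) (TN (TN (TN (TN (TL true) (TL true)) (TN (TL true) (TL true))) (TL false)) (TL false))) (TN (TN (TN (TN (TN (TL true) (TL true)) (TN (TL true) (TL true))) (TL false)) (TN (TN (TN (TL true) (TL true)) (TN (TL true) (TL true))) (TL false))) (TN (TN (TN (TN (TL true) (TL true)) (TN (TL true) (TL true))) (TL false)) (TL false)))) (TN (TN (TN (TN (TN (TN (TL true) (TL true)) (TN (TL true) (TL true))) (TL false)) (TN (TN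 (TN (TL true) (TL true)) (TN (TL true) (TL true))) (TL false))) (TN (TN (TN (TN (TL true) (TL true)) (TN (TL true) (TL true))) (TL false)) (TN (TN (TN (TL true) (TL true)) (TN (TL true) (TL true))) (TL false)))) (TN (TN (TN (TN (TN (TL true) (TL true)) (TN (TL true) (TL true))) (TL false)) (TN (TN (TN (TL true) (TL true)) (TN (TL true) (TL true))) (TL false))) (TN (TN (TN (TN (TL true) (TL true)) (TN (TL true) (TL true))) (TL false)) (TN (TN (TN (TL true) (TL true)) (TN (TL true) (TL true))) (TL false)))))))) (TN (TN (TN (TN (TN (TN (TN (TL false) (TN (TN (TL true) (TL true)) (TN (TL true) (TL true)))) (TN (TL false) (TN (TN (TL true) (TL true)) (TN (TL true) (TL true))))) (TN (TN (TL false) (TN (TN (TL true) (TL true)) (TN (TL true) (TL true)))) (TN (TL false) (TN (TN (TL true) (TL true)) (TN (TL true) (TL true)))))) (TN (TN (TN (TL false) (TN (TN (TL true) (TL true)) (TN (TL true) (TL true)))) (TN (TL false) (TN (TN (TL true) (TL true)) (TN (TL true) (TL true))))) (TN (TN (TL false) (TN (TN (TL true) (TL true)) (TN (TL true) (TL true)))) (TN (TL false) (TN (TN (TL true) (TL true)) (TN (TL true) (TL true))))))) (TN (TN (TN (TL false) (TN (TL false) (TN (TN (TL true) (TL true)) (TN (TL true) (TL true))))) (TN (TN (TL false) (TN (TN (TL true) (TL true)) (TN (TL true) (TL true)))) (TN (TL false) (TN (TN (TL true) (TL true)) (TN (TL true) (TL true)))))) (TN (TN (TL false) (TN (TL false)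 (TN (TN (TL true) (TL true)) (TN (TL true) (TL true))))) (TN (TN (TL false) (TN (TN (TL true) (TL true)) (TN (TL true) (TL true)))) (TN (TL false) (TN (TN (TL true) (TL true)) (TN (TL true) (TL true)))))))) (TN (TN (TN (TN (TL false) (TN (TL false) (TN (TN (TL true) (TL true)) (TN (TL true) (TL true))))) (TN (TL false) (TN (TL false) (TN (TN (TL true) (TL true)) (TN (TL true) (TL true)))))) (TN (TN (TL false) (TN (TL false) (TN (TN (TL true) (TL true)) (TN (TL true) (TL true))))) (TN (TL false) (TN (TL false) (TN (TN (TL true) (TL true)) (TN (TL true) (TL true))))))) (TN (TN (TL false) (TN (TL false) (TN (TL false) (TN (TN (TL true) (TL true)) (TN (TL true) (TL true)))))) (TN (TL false) (TN (TL false) (TN (TL false) (TN (TN (TL true) (TL true)) (TN (TL true) (TL true))))))))) (TN (TN (TN (TL false) (TN (TN (TN (TN (TN (TL true) (TL true)) (TN (TL true) (TL true))) (TL false)) (TL false)) (TL false))) (TN (TL false) (TN (TN (TN (TN (TN (TL true) (TL true)) (TN (TL true) (TL true))) (TL false)) (TL false)) (TN (TN (TN (TN (TL true) (TL true)) (TN (TL true) (TL true))) (TL false)) (TL false))))) (TN (TN (TN (TN (TN (TN (TN (TL true) (TL true)) (TL false)) (TL false)) (TN (TN (TN (TL true) (TL true)) (TN (TL true) (TL true))) (TL false))) (TN (TN (TN (TN (TL true) (TL true)) (TL false)) (TL false)) (TL false))) (TN (TN (TN (TN (TN (TL true) (TL true)) (TN (TL true) (TL true))) (TL false)) (TN (TN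 (TN (TL true) (TL true)) (TN (TL true) (TL true))) (TL false))) (TN (TN (TN (TN (TL true) (TL true)) (TN (TL true) (TL true))) (TL false)) (TL false)))) (TN (TN (TN (TN (TN (TN (TL true) (TL true)) (TL false)) (TL false)) (TN (TN (TN (TL true) (TL true)) (TN (TL true) (TL true))) (TL false))) (TN (TN (TN (TN (TL true) (TL true)) (TL false)) (TL false)) (TN (TN (TN (TL true) (TL true)) (TN (TL true) (TL true))) (TL false)))) (TN (TN (TN (TN (TN (TL true) (TL true)) (TN (TL true) (TL true))) (TL false)) (TN (TN (TN (TL true) (TL true)) (TN (TL true) (TL true))) (TL false))) (TN (TN (TN (TN (TL true) (TL true)) (TN (TL true) (TL true))) (TL false)) (TN (TN (TN (TL true) (TL true)) (TN (TL true) (TL true))) (TL false))))))))))).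

Definition closed :=
  all (fun sg => all (fun dd => has (fun a => (dd <= a) && small_ok sg a (a - dd) &&
      tmem PHI (trans sg a (a - dd))) (iota 0 7)) (iota 0 4)) (elems PHI).

Lemma closed_ok : closed = true.
Proof. by vm_compute. Qed.

Definition unb_b (w : seq int) : bool :=
  all (fun l => take l w != drop (size w - l) w) (iota 1 (size w)./2).

Lemma unb_bP w : unb_b w -> unbordered w.
Proof.
move=> /allP H [x [h0 [h1 [hp hs]]]].
move: hp hs; rewrite prefixE suffixE => /eqP hp /eqP hs.
have := H (size x); rewrite mem_iota hp hs eqxx => /(_ ltac:(lia)).
by [].
Qed.

Lemma PHI_in sg : tmem PHI sg -> forall dd, dd < 4 -> exists2 a, a < 7 &
  (dd <= a) && small_ok sg a (a - dd) && tmem PHI (trans sg a (a - dd)).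
Proof.
move=> /tmem_elems hin dd hdd.
have := closed_ok; rewrite /closed => /allP /(_ _ hin) /allP /(_ dd).
rewrite mem_iota => /(_ ltac:(lia)) /hasP [a]; rewrite mem_iota => /andP [_ ha] H.
by exists a.
Qed.

Lemma main n : 4 <= n -> exists i, 2 <= i /\ unbordered (rs_factor i n) /\ tmem PHI (st i n).
Proof.
elim: n {-2}n (leqnn n) => [|N IH] n hn h4; first by lia.
have [hsmall | hbig] := leqP n 12.
  have base : forall i, 2 <= i -> unb_b (rs_factor i n) -> tmem PHI (st i n) ->
     exists i, 2 <= i /\ unbordered (rs_factor i n) /\ tmem PHI (st i n).
    by move=> i hi hu ht; exists i; split => //; split => //; apply: unb_bP.
  case: n hn h4 hsmall base => [|[|[|[|[|[|[|[|[|[|[|[|[|n]]]]]]]]]]]]] // _ _ _ base.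
  - by apply: (base 6); vm_compute.
  - by apply: (base 6); vm_compute.
  - by apply: (base 7); vm_compute.
  - by apply: (base 3); vm_compute.
  - by apply: (base 3); vm_compute.
  - by apply: (base 4); vm_compute.
  - by apply: (base 4); vm_compute.
  - by apply: (base 2); vm_compute.
  - by apply: (base 2); vm_compute.
set m := (n + 3) %/ 4.
have hm1 : 4 * m <= n + 3 by rewrite /m; lia.
have hm2 : n <= 4 * m by rewrite /m; lia.
set dd := 4 * m - n.
have [i [hi [hu ht]]] := IH m ltac:(lia) ltac:(lia).
have [a ha /andP [/andP [hda hsm] ht']] := PHI_in ht (dd := dd) ltac:(lia).
exists (4 * i + a - 3); split; first by lia.
have hnn : n = 4 * m - dd by lia.
split.
  rewrite hnn; apply: lift => //; lia.
have := @trans_ok i m a (a - dd) hi ltac:(lia) ha ltac:(lia) ltac:(lia).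
have -> : 4 * m + (a - dd) - a = n by lia.
by move=> ->.
Qed.

Theorem theorem5 : forall n : nat, exists i : nat, unbordered (rs_factor i n).
Proof.
move=> n; have [h4 | hs] := leqP 4 n.
  by have [i [_ [hu _]]] := main h4; exists i.
case: n hs => [|[|[|[|n]]]] // _.
- by exists 0; apply: unb_bP; vm_compute.
- by exists 0; apply: unb_bP; vm_compute.
- by exists 2; apply: unb_bP; vm_compute.
- by exists 1; apply: unb_bP; vm_compute.
Qed.
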